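(* Let $w\in S_n$ be a Grassmannian permutation, i.e. a permutation with at most one descent (at most one $p$ with $w(p)>w(p+1)$). Then for $u,v$ in the strong Bruhat interval $[e,w]$, there is an edge of the Bruhat interval polytope $\mathsf{Q}_{e,w}$ between the vertices $u$ and $v$ if and only if there exist $i<\ell$ such that $v=(i\,\ell)u$ and, for each value $m\in\{i+1,\dots,\ell-1\}$, $u^{-1}(m)=v^{-1}(m)=w^{-1}(m)$ (i.e. each of the values $i+1,\dots,\ell-1$ occupies in $u$ and in $v$ exactly the same position as in $w$).
   Context: For $u\le v$ in the strong Bruhat order on $S_n$, the Bruhat interval polytope is $\mathsf{Q}_{u,v}=\operatorname{conv}\{(z(1),\dots,z(n)): z\in S_n,\ u\le z\le v\}\subset\mathbb{R}^n$, where a permutation $z$ is identified with the point $(z(1),\dots,z(n))$. For a transposition $(i\,\ell)$ and $u\in S_n$, $(i\,\ell)u$ denotes $(i\,\ell)\circ u$, the permutation obtained from $u$ by swapping the values $i$ and $\ell$. *)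

(* Defs.v *)
From HB Require Import structures.
From mathcomp Require Import all_boot all_order all_algebra all_fingroup.
Set Implicit Arguments. Unset Strict Implicit. Unset Printing Implicit Defensive.
Import Order.TTheory GRing.Theory Num.Theory.

(* S_n is {perm 'I_n}; value k : 'I_n stands for k+1 in {1,...,n}. *)

Definition inv_count n (u : {perm 'I_n}) : nat :=
  #|[set p : 'I_n * 'I_n | (p.1 < p.2) && (u p.2 < u p.1)]|.

Definition bruhat_step n : rel {perm 'I_n} :=
  fun u v => [exists i : 'I_n, exists j : 'I_n,
     (i < j) && (v == (u * tperm i j)%g)] && (inv_count u < inv_count v).

Definition bruhat_le n (u v : {perm 'I_n}) : bool := connect (@bruhat_step n) u v.

Definition grassmannian n (w : {perm 'I_n}) : bool :=
  #|[set p : 'I_n | [exists q : 'I_n, (val q == p.+1) && (w q < w p)]]| <= 1.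

Local Open Scope ring_scope.

Definition perm_pt (R : nzRingType) n (z : {perm 'I_n}) : 'rV[R]_n :=
  \row_i ((z i).+1)%:R.

Definition conv (R : realFieldType) n (S : seq 'rV[R]_n) (x : 'rV[R]_n) : Prop :=
  exists lam : 'I_(size S) -> R,
    (forall k, 0 <= lam k) /\ \sum_k lam k = 1 /\ x = \sum_k lam k *: S`_k.

Definition dotv (R : nzRingType) n (c x : 'rV[R]_n) : R := \sum_i c 0 i * x 0 i.

Definition face (R : realFieldType) n (S : seq 'rV[R]_n) (c x : 'rV[R]_n) : Prop :=
  conv S x /\ forall y, conv S y -> dotv c y <= dotv c x.

Definition is_edge (R : realFieldType) n (S : seq 'rV[R]_n) (a b : 'rV[R]_n) : Prop :=
  a <> b /\ exists c : 'rV[R]_n, forall x, face S c x <-> conv [:: a; b] x.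

Definition bip_points (R : realFieldType) n (u v : {perm 'I_n}) : seq 'rV[R]_n :=
  [seq perm_pt R z | z <- enum [pred z | bruhat_le u z && bruhat_le z v]].

(* Main.v *)
Require Import Defs.
From HB Require Import structures.
From mathcomp Require Import all_boot all_order all_algebra all_fingroup.
Import Order.TTheory GRing.Theory Num.Theory.
From mathcomp Require Import zify ring lra.
Require Stdlib.Logic.Classical_Prop.
Set Implicit Arguments. Unset Strict Implicit. Unset Printing Implicit Defensive.

Section Inv.
Variable n : nat.
Implicit Types (z : {perm 'I_n}) (x y : 'I_n).

Lemma swap_pos z x y : (z * tperm (z x) (z y))%g = (tperm x y * z)%g.
Proof. by rewrite -tpermJ /conjg !mulgA mulgV mul1g. Qed.

Lemma inv_lt z x y : x < y -> z x < z y ->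
  inv_count z < inv_count (tperm x y * z)%g.
Proof.
move=> lxy lzxy.
set s := tperm x y.
set z' := (s * z)%g.
have z'E t : z' t = z (s t) by rewrite permM.
pose Inv (u : {perm 'I_n}) := [set q : 'I_n * 'I_n | (q.1 < q.2) && (u q.2 < u q.1)].
pose phi (q : 'I_n * 'I_n) := if s q.1 < s q.2 then (s q.1, s q.2) else q.
have sK t : s (s t) = t by rewrite tpermK.
have inj : {in Inv z &, injective phi}.
  move=> [p1 q1] [p2 q2]; rewrite !inE /= /phi /=.
  move=> /andP[lt1 _] /andP[lt2 _].
  case: ifP => c1; case: ifP => c2 //.
  - by case=> /(congr1 s); rewrite !sK => -> /(congr1 s); rewrite !sK => ->.
  - by case=> e1 e2; move: c2; rewrite -e1 -e2 !sK lt1.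
  - by case=> e1 e2; move: c1; rewrite e1 e2 !sK lt2.
have sub : phi @: Inv z \subset Inv z' :\ (x, y).
  apply/subsetP=> q' /imsetP[[p q] pq ->]; move: pq; rewrite !inE /= /phi.
  move=> /andP[lpq lzqp].
  case: ifP => c /=.
  - rewrite !z'E !sK c lzqp !andbT.
    apply/negP=> /eqP[ep eq]; move: lpq; rewrite -(sK p) -(sK q) ep eq.
    by rewrite /s tpermL tpermR ltnNge (ltnW lxy).
  - rewrite lpq /= !z'E.
    have nxy : (p, q) != (x, y).
      apply/negP=> /eqP[ep eq]; move: lzqp; rewrite ep eq ltnNge (ltnW lzxy) //.
    rewrite nxy /=.
    move: c; rewrite /s /=.
    case: (tpermP x y p) => [ep|ep|npx npy];
    case: (tpermP x y q) => [eq|eq|nqx nqy]; subst.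
    all: try by rewrite ?eqxx ?ltnn in nxy lpq *.
    + by move=> _; apply: ltn_trans lzqp lzxy.
    + by rewrite lxy.
    + by rewrite (ltn_trans lxy lpq).
    + by rewrite (ltn_trans lpq lxy).
    by move=> _; apply: ltn_trans lzxy lzqp.
apply: (@leq_ltn_trans #|Inv z' :\ (x, y)|).
  rewrite /inv_count -/(Inv z) -(card_in_imset inj); exact: subset_leq_card.
rewrite /inv_count -/(Inv z') [X in _ < X](cardsD1 (x, y)).
by rewrite inE /= lxy !z'E /s tpermL tpermR lzxy.
Qed.
End Inv.

Lemma step_pos n (u v : {perm 'I_n}) : bruhat_step u v ->
  exists a b : 'I_n, [/\ a < b, u a < u b & v = (tperm a b * u)%g].
Proof.
case/andP=> /existsP[i /existsP[j /andP[lij /eqP ->]]] linv.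
set a := (u^-1)%g i; set b := (u^-1)%g j.
have ua : u a = i by rewrite permKV.
have ub : u b = j by rewrite permKV.
have E : (u * tperm i j)%g = (tperm a b * u)%g by rewrite -swap_pos ua ub.
rewrite E in linv *.
case: (ltngtP a b) => [lab|lba|eab].
- by exists a, b; rewrite ua ub.
- exfalso; move: linv.
  have := @inv_lt n (tperm a b * u) b a lba.
  rewrite !permM tpermL tpermR ua ub lij => /(_ isT).
  rewrite mulgA tpermC tperm2 mul1g => h1 h2.
  by move: (ltn_trans h1 h2); rewrite ltnn.
- by move: lij; rewrite -ua -ub (val_inj eab) ltnn.
Qed.

Lemma step_of n (u : {perm 'I_n}) (a b : 'I_n) : a < b -> u a < u b ->
  bruhat_step u (tperm a b * u)%g.
Proof.
move=> lab luab; apply/andP; split; last exact: inv_lt.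
apply/existsP; exists (u a); apply/existsP; exists (u b).
by rewrite luab swap_pos eqxx.
Qed.

Lemma exists_inv n (z : {perm 'I_n}) : z != 1%g ->
  exists x y : 'I_n, x < y /\ z y < z x.
Proof.
move=> nz.
have ex : exists k, [exists x : 'I_n, (val x == k) && (z x != x)].
  have : exists x, z x != x.
    apply/existsP; apply: contraR nz => /existsPn h.
    by apply/eqP/permP=> x; rewrite perm1; apply/eqP; move: (h x); rewrite negbK.
  by case=> x hx; exists (val x); apply/existsP; exists x; rewrite eqxx.
case: (ex_minnP ex) => m /existsP[x /andP[/eqP xm zx]] mmin.
have small (t : 'I_n) : t < x -> z t = t.
  move=> ltx; apply/eqP; apply/negPn/negP => zt.
  have : (val x <= val t)%N.
    by rewrite xm; apply: mmin; apply/existsP; exists t; rewrite eqxx zt.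
  by rewrite leqNgt ltx.
exists x, ((z^-1)%g x); split.
  case: (ltngtP x ((z^-1)%g x)) => [//|lt|eq].
  - by move: (small _ lt); rewrite permKV => e; move: zx; rewrite {1}e permKV eqxx.
  - by move: zx; rewrite {1}(val_inj eq) permKV eqxx.
rewrite permKV; case: (ltngtP x (z x)) => [//|lt|eq].
- have := small _ lt => /perm_inj e; by rewrite e eqxx in zx.
- by rewrite -(val_inj eq) eqxx in zx.
Qed.

Lemma one_le n (z : {perm 'I_n}) : bruhat_le 1 z.
Proof.
move: {2}(inv_count z) (leqnn (inv_count z)) => k.
elim: k z => [|k IH] z hz.
  case: (eqVneq z 1%g) => [->|nz]; first exact: connect0.
  case: (exists_inv nz) => x [y [lxy lz]].
  set z' := (tperm x y * z)%g.
  have := @inv_lt n z' x y lxy.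
  rewrite /z' !permM tpermL tpermR lz => /(_ isT).
  by rewrite mulgA tperm2 mul1g ltnNge (leq_trans hz (leq0n _)).
case: (eqVneq z 1%g) => [->|nz]; first exact: connect0.
case: (exists_inv nz) => x [y [lxy lz]].
set z' := (tperm x y * z)%g.
have hz'z : z = (tperm x y * z')%g by rewrite /z' mulgA tperm2 mul1g.
have lz' : z' x < z' y by rewrite /z' !permM tpermL tpermR.
apply: (connect_trans (IH z' _)).
  have := @inv_lt n z' x y lxy lz'; rewrite -hz'z => h.
  by rewrite -ltnS (leq_trans h hz).
by apply: connect1; rewrite [X in bruhat_step _ X]hz'z; apply: step_of.
Qed.

Definition allowed n (w : {perm 'I_n}) (p : nat) (j : 'I_n) (x : nat) : bool :=
  if j < p then x <= w j else w j <= x.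
Definition inbox n (w : {perm 'I_n}) (p : nat) (z : {perm 'I_n}) : bool :=
  [forall j, allowed w p j (z j)].
Definition freeb n (w : {perm 'I_n}) (p : nat) (j : 'I_n) (k : nat) : bool :=
  if j < p then k < w j else w j <= k.
Definition mono n (w : {perm 'I_n}) (p : nat) : Prop :=
  (forall x y : 'I_n, x < y -> y < p -> w x < w y) /\
  (forall x y : 'I_n, p <= x -> x < y -> w x < w y).

Lemma incr_chain n (w : {perm 'I_n}) (lo hi : nat) :
  (forall t t' : 'I_n, lo <= t -> val t' = t.+1 -> t' < hi -> w t < w t') ->
  forall x y : 'I_n, lo <= x -> x < y -> y < hi -> w x < w y.
Proof.
move=> H x y lox lxy yhi.
have [d yd] : exists d, val y = x + d.+1.
  by exists (y - x).-1; rewrite prednK ?subn_gt0 // subnKC // ltnW.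
elim: d y yd lxy yhi => [|d IH] y yd lxy yhi.
  by apply: H => //; rewrite yd addn1.
have ly : (y.-1 < n)%N by rewrite (leq_ltn_trans (leq_pred _)).
set y' := Ordinal ly.
have y'd : val y' = x + d.+1 by rewrite /= yd addnS.
have h1 : w x < w y'.
  apply: IH => //; first by rewrite y'd addnS ltnS leq_addr.
  by rewrite (leq_ltn_trans _ yhi) // leq_pred.
apply: (ltn_trans h1); apply: H.
- by rewrite (leq_trans lox) // y'd leq_addr.
- by rewrite /= yd addnS.
- exact: yhi.
Qed.

Lemma grass_mono n (w : {perm 'I_n}) : grassmannian w -> exists p, mono w p.
Proof.
rewrite /grassmannian => /card_le1_eqP D1.
set D := [set p : 'I_n | _] in D1.
have asc (t t' : 'I_n) : val t' = t.+1 -> t \notin D -> w t < w t'.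
  move=> tt' tD; rewrite ltn_neqAle; apply/andP; split.
    apply/negP=> /eqP e; move: (perm_inj (val_inj e)) => et; rewrite et in tt'.
    by move: (ltnSn t'); rewrite -{2}tt' ltnn.
  rewrite leqNgt; apply/negP=> lt; move: tD; rewrite inE; apply/negP/negPn.
  by apply/existsP; exists t'; rewrite tt' eqxx lt.
case: (pickP (mem D)) => [d dD|noD].
  exists d.+1; split.
  - move=> x y lxy yp; apply: (incr_chain (lo := 0) (hi := d.+1) _ _ lxy yp) => // t t' _ tt' t'p.
    apply: asc => //; apply/negP=> tD.
    by move: t'p; rewrite tt' (D1 _ _ tD dD) ltnn.
  - move=> x y px lxy; apply: (incr_chain (lo := d.+1) (hi := n) _ px lxy) => // t t' dt tt' _.
    apply: asc => //; apply/negP=> tD.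
    by move: dt; rewrite (D1 _ _ tD dD) ltnn.
exists n; split.
- move=> x y lxy _; apply: (incr_chain (lo := 0) (hi := n) _ _ lxy) => // t t' _ tt' _.
  by apply: asc => //; apply/negP=> tD; move: (noD t); rewrite /= tD.
- by move=> x y nx; move: (ltn_ord x); rewrite ltnNge nx.
Qed.

Section Box.
Variables (n : nat) (w : {perm 'I_n}) (p : nat).
Hypothesis M : mono w p.

Lemma box_down (u v : {perm 'I_n}) : bruhat_step u v -> inbox w p v -> inbox w p u.
Proof.
case/step_pos=> a [b [lab luab ->]] /forallP hv; apply/forallP=> t.
have va : (tperm a b * u)%g a = u b by rewrite permM tpermL.
have vb : (tperm a b * u)%g b = u a by rewrite permM tpermR.
have hva := hv a; have hvb := hv b.
rewrite /allowed va vb in hva hvb *.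
case: (tpermP a b t) => [->|->|nta ntb].
- case: ifP => ap; first by move: hva; rewrite ap => /(leq_trans (ltnW luab)).
  have bp : (p <= b)%N by rewrite (leq_trans _ (ltnW lab)) // leqNgt ap.
  move: hvb; rewrite ltnNge bp /= => h.
  by apply: leq_trans h; apply: ltnW; apply: M.2 => //; rewrite leqNgt ap.
- case: ifP => bp.
    move: hva; rewrite (ltn_trans lab bp) => h.
    by apply: (leq_trans h); apply: ltnW; apply: M.1.
  by move: hvb; rewrite bp => h; apply: (leq_trans h); apply: ltnW.
- by move: (hv t); rewrite permM tpermD // eq_sym; apply/negP=> /eqP e; [apply: nta|apply: ntb].
Qed.

Lemma box_w : inbox w p w.
Proof. by apply/forallP=> j; rewrite /allowed; case: ifP. Qed.

Lemma box_of_le (z : {perm 'I_n}) : bruhat_le z w -> inbox w p z.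
Proof.
case/connectP=> s; elim: s z => [|y s IH] z /=; first by move=> _ <-; exact: box_w.
case/andP=> st ps ew; apply: (box_down st); exact: IH.
Qed.
End Box.

Lemma cnt_lt (N m : nat) : (\sum_(k < N) ((k < m)%N : nat))%N = minn m N.
Proof.
elim: N => [|N IH]; first by rewrite big_ord0 minn0.
rewrite big_ord_recr /= IH; case: (leqP m N) => h; rewrite ?addn0 ?addn1; lia.
Qed.

Section Level.
Variables (n : nat) (w : {perm 'I_n}) (p : nat) (R : realFieldType) (c : 'I_n -> R).
Local Open Scope ring_scope.

Definition fval (z : {perm 'I_n}) : R := \sum_j c j * (z j)%:R.
Definition Glev (k : 'I_n) (z : {perm 'I_n}) : R :=
  \sum_j c j * (nat_of_bool (k < z j)%N)%:R.

Lemma level_decomp z : fval z = \sum_(k < n) Glev k z.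
Proof.
rewrite /fval /Glev exchange_big; apply: eq_bigr => j _.
by rewrite -mulr_sumr -natr_sum cnt_lt (minn_idPl (ltnW (ltn_ord _))).
Qed.

Definition Aset (u z : {perm 'I_n}) (k : 'I_n) := [set j | (z j <= k < u j)%N].
Definition Bset (u z : {perm 'I_n}) (k : 'I_n) := [set j | (u j <= k < z j)%N].

Lemma Glev_diff u z k :
  Glev k z - Glev k u = \sum_(j in Bset u z k) c j - \sum_(j in Aset u z k) c j.
Proof.
rewrite /Glev -sumrB [in RHS]big_mkcond [X in _ = _ - X]big_mkcond /= -sumrB.
apply: eq_bigr => j _; rewrite !inE !ltnNge.
case: (z j <= k)%N; case: (u j <= k)%N => /=;
  by rewrite ?mulr1 ?mulr0 ?subrr ?subr0 ?sub0r.
Qed.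

Lemma card_AB u z k : #|Aset u z k| = #|Bset u z k|.
Proof.
have S (y : {perm 'I_n}) : #|[set j | (k < y j)%N]| = #|[set v : 'I_n | (k < v)%N]|.
  have -> : [set j | (k < y j)%N] = y @^-1: [set v : 'I_n | (k < v)%N].
    by apply/setP=> j; rewrite !inE.
  by rewrite card_preimset //; apply: perm_inj.
have EA : Aset u z k = [set j | (k < u j)%N] :\: [set j | (k < z j)%N].
  by apply/setP=> j; rewrite !inE -leqNgt andbC.
have EB : Bset u z k = [set j | (k < z j)%N] :\: [set j | (k < u j)%N].
  by apply/setP=> j; rewrite !inE -leqNgt andbC.
have h1 := cardsID [set j | (k < z j)%N] [set j | (k < u j)%N].
have h2 := cardsID [set j | (k < u j)%N] [set j | (k < z j)%N].
rewrite setIC in h2.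
rewrite EA EB; move: h1 h2; rewrite !S; lia.
Qed.

Lemma pair_sum (A B : {set 'I_n}) : #|A| = #|B| ->
  \sum_(x in A) \sum_(y in B) (c x - c y) = (\sum_(x in A) c x - \sum_(y in B) c y) *+ #|A|.
Proof.
move=> AB.
rewrite (eq_bigr (fun x => c x *+ #|B| - \sum_(y in B) c y)); last first.
  by move=> x _; rewrite sumrB sumr_const.
by rewrite sumrB sumr_const sumrMnl AB mulrnBl.
Qed.

Lemma sum_gt0 (I : finType) (P : pred I) (G : I -> R) i0 :
  P i0 -> 0 < G i0 -> (forall i, P i -> 0 <= G i) -> 0 < \sum_(i | P i) G i.
Proof.
move=> Pi0 g0 ge; rewrite (bigD1 i0) //=; apply: ltr_wpDr => //.
by apply: sumr_ge0 => i /andP[Pi _]; apply: ge.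
Qed.

Lemma pair_le (A B : {set 'I_n}) : #|A| = #|B| ->
  (forall x y, x \in A -> y \in B -> c y <= c x) ->
  \sum_(y in B) c y <= \sum_(x in A) c x.
Proof.
move=> AB H.
case: (posnP #|A|) => [A0|Apos].
  move: (A0); rewrite AB => B0.
  move/eqP: A0; rewrite cards_eq0 => /eqP ->.
  by move/eqP: B0; rewrite cards_eq0 => /eqP ->; rewrite !big_set0.
rewrite -subr_ge0 -(pmulrn_lge0 _ Apos) -pair_sum //.
apply: sumr_ge0 => x xA; apply: sumr_ge0 => y yB; rewrite subr_ge0; exact: H.
Qed.

Lemma pair_lt (A B : {set 'I_n}) x0 y0 : #|A| = #|B| ->
  (forall x y, x \in A -> y \in B -> c y <= c x) ->
  x0 \in A -> y0 \in B -> c y0 < c x0 ->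
  \sum_(y in B) c y < \sum_(x in A) c x.
Proof.
move=> AB H xA yB lt.
have Apos : (0 < #|A|)%N by rewrite card_gt0; apply/set0Pn; exists x0.
rewrite -subr_gt0 -(pmulrn_lgt0 _ Apos) -pair_sum //.
apply: (sum_gt0 xA).
  apply: (sum_gt0 yB); first by rewrite subr_gt0.
  by move=> y yB'; rewrite subr_ge0; exact: H.
by move=> x xA'; apply: sumr_ge0 => y yB'; rewrite subr_ge0; exact: H.
Qed.

Variables (u z : {perm 'I_n}).
Hypotheses (bu : inbox w p u) (bz : inbox w p z).
Hypothesis H : forall x y (k : 'I_n), (u y <= k < u x)%N ->
  freeb w p x k -> freeb w p y k -> c y <= c x.

Lemma A_free k x : x \in Aset u z k -> freeb w p x k.
Proof.
rewrite inE /freeb => /andP[h1 h2]; move/forallP: bu => /(_ x); move/forallP: bz => /(_ x).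
rewrite /allowed; case: ifP => _ hz hu; first exact: leq_trans h2 hu.
exact: leq_trans hz h1.
Qed.

Lemma B_free k y : y \in Bset u z k -> freeb w p y k.
Proof.
rewrite inE /freeb => /andP[h1 h2]; move/forallP: bu => /(_ y); move/forallP: bz => /(_ y).
rewrite /allowed; case: ifP => _ hz hu; first exact: leq_trans h2 hz.
exact: leq_trans hu h1.
Qed.

Lemma AB_H k x y : x \in Aset u z k -> y \in Bset u z k -> c y <= c x.
Proof.
move=> xA yB; apply: H; last by [apply: B_free yB]; last by [apply: A_free xA].
by move: xA yB; rewrite !inE => /andP[_ ->] /andP[-> _].
Qed.

Lemma level_le : fval z <= fval u.
Proof.
rewrite !level_decomp; apply: ler_sum => k _.
rewrite -subr_le0 Glev_diff subr_le0; apply: pair_le; first exact: card_AB.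
exact: AB_H.
Qed.

Lemma level_eq : fval z = fval u ->
  forall (k : 'I_n) x y, x \in Aset u z k -> y \in Bset u z k -> c x = c y.
Proof.
move=> E k x y xA yB; apply/eqP; rewrite eq_le (AB_H xA yB) andbT.
rewrite leNgt; apply/negP=> lt; move: E; apply/eqP; rewrite lt_eqF //.
have hk : Glev k z < Glev k u.
  rewrite -subr_lt0 Glev_diff subr_lt0; apply: (pair_lt (card_AB _ _ _) _ xA yB) => //.
  exact: AB_H.
rewrite !level_decomp (bigD1 k) //= [X in _ < X](bigD1 k) //=.
apply: ltr_leD => //; apply: ler_sum => k' _.
rewrite -subr_le0 Glev_diff subr_le0; apply: pair_le; first exact: card_AB.
exact: AB_H.
Qed.

End Level.

Lemma exists_pair n (u z : {perm 'I_n}) t : z t != u t ->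
  exists (k : 'I_n) x y, [/\ x \in Aset u z k, y \in Bset u z k & (x = t \/ y = t)].
Proof.
move=> ne; case: (ltngtP (z t) (u t)) => [lt|lt|eq].
- have tA : t \in Aset u z (z t) by rewrite inE leqnn lt.
  have : (0 < #|Bset u z (z t)|)%N by rewrite -card_AB card_gt0; apply/set0Pn; exists t.
  rewrite card_gt0 => /set0Pn[y yB]; exists (z t), t, y; split => //; by left.
- have tB : t \in Bset u z (u t) by rewrite inE leqnn lt.
  have : (0 < #|Aset u z (u t)|)%N by rewrite card_AB card_gt0; apply/set0Pn; exists t.
  rewrite card_gt0 => /set0Pn[x xA]; exists (u t), x, t; split => //; by right.
- by rewrite (val_inj eq) eqxx in ne.
Qed.

Section Desc.
Variables (n : nat) (w : {perm 'I_n}) (p : nat) (R : realFieldType) (c : 'I_n -> R).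
Local Open Scope ring_scope.

Definition viol (u : {perm 'I_n}) (j j' : 'I_n) : Prop :=
  [/\ (u j' < u j)%N, c j <= c j' &
     exists k : nat, [/\ (u j' <= k < u j)%N, freeb w p j k & freeb w p j' k]].

Lemma swap_box (u : {perm 'I_n}) (j j' : 'I_n) : inbox w p u ->
  allowed w p j (u j') -> allowed w p j' (u j) -> inbox w p (tperm j j' * u)%g.
Proof.
move=> /forallP bu a1 a2; apply/forallP=> t; rewrite permM.
by case: tpermP => [->|->|_ _].
Qed.

Lemma descent (u : {perm 'I_n}) (bu : inbox w p u) d : forall j j',
  (u j - u j' <= d)%N -> viol u j j' ->
  exists x y : 'I_n, [/\ (u y < u x)%N, c x <= c y, (u j' <= u y)%N, (u x <= u j)%N
                        & inbox w p (tperm x y * u)%g].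
Proof.
have bx (t : 'I_n) : allowed w p t (u t) by move/forallP: bu.
elim: d => [|d IH] j j' gap [lt cle [k [kb fj fj']]].
  by move: gap lt; lia.
case Aj: (allowed w p j (u j')); case Aj': (allowed w p j' (u j)).
- by exists j, j'; split => //; exact: swap_box.
-
  have j'p : (j' < p)%N.
    case: (ltnP j' p) => // nj'p; move: Aj' (bx j'); rewrite /allowed ltnNge nj'p /= => /negbT.
    by rewrite -ltnNge => h1 h2; lia.
  move: Aj' fj'; rewrite /allowed /freeb j'p => /negbT; rewrite -ltnNge => wj'lt kw.
  set t := (u^-1)%g (w j').
  have ut : (u t = (w j') :> nat) by rewrite permKV.
  have ntj' : t != j'.
    by apply/eqP=> e; move: ut; rewrite e => ut'; lia.
  have wtq : (w t != (w j') :> nat).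
    by apply/negP=> /eqP/val_inj/perm_inj e; rewrite e eqxx in ntj'.
  have bt := bx t; rewrite /allowed ut in bt.
  case: (leP (c j) (c t)) => ct.
  + have v1 : viol u j t.
      split => //; first by rewrite ut; lia.
      exists (w j'); split; first by rewrite ut leqnn; lia.
      * move: fj (bx j); rewrite /freeb /allowed; case: ifP => _; lia.
      * by move: bt; rewrite /freeb; case: ifP => _; lia.
    have [x [y [h1 h2 h3 h4 h5]]] := IH j t ltac:(rewrite ut; lia) v1.
    by exists x, y; split => //; rewrite ut in h3; lia.
  + have v2 : viol u t j'.
      split => //; first by rewrite ut; lia.
        by apply: le_trans cle; apply: ltW.
      exists (w j').-1; split; first by rewrite ut; lia.
      * by move: bt; rewrite /freeb; case: ifP => _; lia.
      * by rewrite /freeb j'p; lia.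
    have [x [y [h1 h2 h3 h4 h5]]] := IH t j' ltac:(rewrite ut; lia) v2.
    by exists x, y; split => //; rewrite ut in h4; lia.
-
  have jp : (p <= j)%N.
    case: (leqP p j) => // jp'; move: Aj (bx j); rewrite /allowed jp' => /negbT.
    by rewrite -ltnNge => h1 h2; lia.
  move: Aj fj; rewrite /allowed /freeb ltnNge jp /= => /negbT; rewrite -ltnNge => wjlt kw.
  set t := (u^-1)%g (w j).
  have ut : (u t = (w j) :> nat) by rewrite permKV.
  have ntj : t != j.
    by apply/eqP=> e; move: kb; rewrite -e ut; lia.
  have wtq : (w t != (w j) :> nat).
    by apply/negP=> /eqP/val_inj/perm_inj e; rewrite e eqxx in ntj.
  have bt := bx t; rewrite /allowed ut in bt.
  case: (leP (c j) (c t)) => ct.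
  + have v1 : viol u j t.
      split => //; first by rewrite ut; lia.
      exists (w j); split; first by rewrite ut leqnn; lia.
      * by rewrite /freeb ltnNge jp /=.
      * by move: bt; rewrite /freeb; case: ifP => _; lia.
    have [x [y [h1 h2 h3 h4 h5]]] := IH j t ltac:(rewrite ut; lia) v1.
    by exists x, y; split => //; rewrite ut in h3; lia.
  + have v2 : viol u t j'.
      split => //; first by rewrite ut; lia.
        by apply: le_trans cle; apply: ltW.
      exists (w j).-1; split; first by rewrite ut; lia.
      * by move: bt; rewrite /freeb; case: ifP => _; lia.
      * move: fj' (bx j'); rewrite /freeb /allowed; case: ifP => _; lia.
    have [x [y [h1 h2 h3 h4 h5]]] := IH t j' ltac:(rewrite ut; lia) v2.
    by exists x, y; split => //; rewrite ut in h4; lia.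
- (* both fail: handle as the first failure *)
  have jp : (p <= j)%N.
    case: (leqP p j) => // jp'; move: Aj (bx j); rewrite /allowed jp' => /negbT.
    by rewrite -ltnNge => h1 h2; lia.
  move: Aj fj; rewrite /allowed /freeb ltnNge jp /= => /negbT; rewrite -ltnNge => wjlt kw.
  set t := (u^-1)%g (w j).
  have ut : (u t = (w j) :> nat) by rewrite permKV.
  have ntj : t != j.
    by apply/eqP=> e; move: kb; rewrite -e ut; lia.
  have wtq : (w t != (w j) :> nat).
    by apply/negP=> /eqP/val_inj/perm_inj e; rewrite e eqxx in ntj.
  have bt := bx t; rewrite /allowed ut in bt.
  case: (leP (c j) (c t)) => ct.
  + have v1 : viol u j t.
      split => //; first by rewrite ut; lia.
      exists (w j); split; first by rewrite ut leqnn; lia.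
      * by rewrite /freeb ltnNge jp /=.
      * by move: bt; rewrite /freeb; case: ifP => _; lia.
    have [x [y [h1 h2 h3 h4 h5]]] := IH j t ltac:(rewrite ut; lia) v1.
    by exists x, y; split => //; rewrite ut in h3; lia.
  + have v2 : viol u t j'.
      split => //; first by rewrite ut; lia.
        by apply: le_trans cle; apply: ltW.
      exists (w j).-1; split; first by rewrite ut; lia.
      * by move: bt; rewrite /freeb; case: ifP => _; lia.
      * move: fj' (bx j'); rewrite /freeb /allowed; case: ifP => _; lia.
    have [x [y [h1 h2 h3 h4 h5]]] := IH t j' ltac:(rewrite ut; lia) v2.
    by exists x, y; split => //; rewrite ut in h4; lia.
Qed.
End Desc.

Section Cor.
Variables (n : nat) (w : {perm 'I_n}) (p : nat) (R : realFieldType) (c : 'I_n -> R).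
Local Open Scope ring_scope.

Lemma swap_val (u : {perm 'I_n}) (x y : 'I_n) :
  fval c (tperm x y * u)%g = fval c u + (c x - c y) * ((u y)%:R - (u x)%:R).
Proof.
case: (eqVneq x y) => [<-|nxy].
  rewrite tperm1 mul1g subrr mul0r addr0 //.
have E1 (G : 'I_n -> R) : \sum_t G t = G x + G y + \sum_(t | (t != x) && (t != y)) G t.
  by rewrite (bigD1 x) //= (bigD1 y) /= ?addrA // eq_sym.
rewrite /fval !E1 !permM tpermL tpermR.
rewrite (eq_bigr (fun t => c t * (u t)%:R)); last first.
  by move=> t /andP[tx ty]; rewrite permM tpermD // eq_sym.
ring.
Qed.

Lemma exists_diff (u z : {perm 'I_n}) : z != u -> exists t, z t != u t.
Proof.
move=> nzu; case: (pickP (fun t => z t != u t)) => [t ht|h]; first by exists t.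
by move/eqP: nzu; case; apply/permP => t; move: (h t) => /negbFE/eqP.
Qed.

Lemma level_strict (u z : {perm 'I_n}) : inbox w p u -> inbox w p z ->
  (forall x y (k : 'I_n), (u y <= k < u x)%N -> freeb w p x k -> freeb w p y k -> c y < c x) ->
  z != u -> fval c z < fval c u.
Proof.
move=> bu bz Hs nzu.
have Hw : forall x y (k : 'I_n), (u y <= k < u x)%N -> freeb w p x k -> freeb w p y k -> c y <= c x.
  by move=> x y k h1 h2 h3; exact: (ltW (Hs x y k h1 h2 h3)).
rewrite lt_neqAle (level_le bu bz Hw) andbT; apply/negP => /eqP E.
have [t ht] := exists_diff nzu.
have [k [x [y [xA yB _]]]] := exists_pair ht.
have := level_eq bu bz Hw E xA yB => exy.
have : c y < c x.
  apply: Hs; last exact: (B_free bu bz yB); last exact: (A_free bu bz xA).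
  by move: xA yB; rewrite !inE => /andP[_ ->] /andP[-> _].
by rewrite exy ltxx.
Qed.

Lemma level_exc (u z : {perm 'I_n}) (a b : 'I_n) : inbox w p u -> inbox w p z ->
  c a = c b ->
  (forall x y (k : 'I_n), (u y <= k < u x)%N -> freeb w p x k -> freeb w p y k ->
     c y < c x \/ (x = b /\ y = a)) ->
  fval c z <= fval c u /\
  (fval c z = fval c u -> forall t, t != a -> t != b -> z t = u t).
Proof.
move=> bu bz cab He.
have Hw : forall x y (k : 'I_n), (u y <= k < u x)%N -> freeb w p x k -> freeb w p y k -> c y <= c x.
  by move=> x y k h1 h2 h3; case: (He x y k h1 h2 h3) => [h|[-> ->]]; [exact: ltW | rewrite cab].
split; first exact: (level_le bu bz Hw).
move=> E t ta tb; apply/eqP; apply/negPn/negP => ht.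
have [k [x [y [xA yB xyt]]]] := exists_pair ht.
have := level_eq bu bz Hw E xA yB => exy.
have hb : (u y <= k < u x)%N by move: xA yB; rewrite !inE => /andP[_ ->] /andP[-> _].
case: (He x y k hb (A_free bu bz xA) (B_free bu bz yB)) => [|[ex ey]].
  by rewrite exy ltxx.
by case: xyt => e; [move: tb; rewrite -e ex eqxx | move: ta; rewrite -e ey eqxx].
Qed.
End Cor.

Section Box2.
Variables (n : nat) (w : {perm 'I_n}) (p : nat).

Definition Fn (z : {perm 'I_n}) : nat := \sum_(t : 'I_n) (n - t) * z t.
Local Open Scope ring_scope.
Definition cw (t : 'I_n) : rat := (n - t)%:R.

Lemma fval_Fn z : fval cw z = (Fn z)%:R.
Proof. by rewrite /fval /Fn natr_sum; apply: eq_bigr => t _; rewrite natrM. Qed.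

Lemma cw_le (x y : 'I_n) : (cw x <= cw y) = (y <= x)%N.
Proof. rewrite /cw ler_nat; move: (ltn_ord x) (ltn_ord y) => hx hy; apply/idP/idP; lia. Qed.

Lemma cw_lt (x y : 'I_n) : (cw x < cw y) = (y < x)%N.
Proof. rewrite /cw ltr_nat; move: (ltn_ord x) (ltn_ord y) => hx hy; apply/idP/idP; lia. Qed.

Lemma w_strict : forall x y (k : 'I_n), (w y <= k < w x)%N -> freeb w p x k -> freeb w p y k -> cw y < cw x.
Proof.
move=> x y k /andP[h1 h2]; rewrite /freeb cw_lt.
case: ifP => xp; case: ifP => yp; lia.
Qed.

Lemma box_le (z : {perm 'I_n}) : inbox w p z -> bruhat_le z w.
Proof.
have bw := box_w w p.
move: {2}(Fn w - Fn z)%N (leqnn (Fn w - Fn z)) => m.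
elim: m z => [|m IH] z hm bz.
  case: (eqVneq z w) => [->|nzw]; first exact: connect0.
  have := level_strict bw bz w_strict nzw; rewrite !fval_Fn ltr_nat; lia.
case: (eqVneq z w) => [->|nzw]; first exact: connect0.
have [[j [j' v]]|nov] := Classical_Prop.classic (exists j j', viol w p cw z j j').
  have [x [y [h1 h2 h3 h4 h5]]] := descent bz (leqnn _) v.
  have lyx : (y < x)%N.
    move: h2; rewrite cw_le leq_eqVlt => /orP[/eqP e|//].
    by move: h1; rewrite (val_inj e) ltnn.
  set z' := (tperm x y * z)%g.
  have st : bruhat_step z z' by rewrite /z' tpermC; apply: step_of.
  have inc : fval cw z < fval cw z'.
    rewrite /z' swap_val ltrDl nmulr_rgt0; first by rewrite subr_lt0 ltr_nat.
    by rewrite subr_lt0 cw_lt.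
  have le' : fval cw z' <= fval cw w.
    apply: (level_le bw h5) => x' y' k hb f1 f2; apply: ltW; exact: w_strict hb f1 f2.
  move: inc le'; rewrite !fval_Fn !ler_nat !ltr_nat => inc le'.
  apply: (connect_trans (connect1 st)); apply: IH => //; lia.
exfalso.
have Hs : forall x y (k : 'I_n), (z y <= k < z x)%N -> freeb w p x k -> freeb w p y k -> cw y < cw x.
  move=> x y k hb fx fy; rewrite ltNge; apply/negP => cle.
  apply: nov; exists x, y; split => //; first by case/andP: hb; lia.
  by exists k.
have nwz : w != z by rewrite eq_sym.
have := level_strict bz bw Hs nwz.
have := level_strict bw bz w_strict nzw.
by move=> h1 h2; move: (lt_trans h1 h2); rewrite ltxx.
Qed.
End Box2.

Section Geo.
Variables (R : realFieldType) (n : nat).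
Local Open Scope ring_scope.
Implicit Types (S : seq 'rV[R]_n) (a b x : 'rV[R]_n).

Lemma dotv_sum (c : 'rV[R]_n) S (lam : 'I_(size S) -> R) :
  dotv c (\sum_k lam k *: S`_k) = \sum_k lam k * dotv c S`_k.
Proof.
rewrite /dotv (eq_bigr (fun i => \sum_k c 0 i * (lam k * S`_k 0 i))); last first.
  by move=> i _; rewrite summxE mulr_sumr; apply: eq_bigr => k _; rewrite mxE.
rewrite exchange_big; apply: eq_bigr => k _; rewrite mulr_sumr.
by apply: eq_bigr => i _; rewrite mulrCA.
Qed.

Lemma conv_le (c : 'rV[R]_n) S x M : conv S x ->
  (forall k : 'I_(size S), dotv c S`_k <= M) -> dotv c x <= M.
Proof.
case=> lam [l0 [l1 ->]] H; rewrite dotv_sum.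
apply: (@le_trans _ _ (\sum_k lam k * M)); last by rewrite -mulr_suml l1 mul1r.
by apply: ler_sum => k _; apply: ler_wpM2l.
Qed.

Lemma conv_nth S (k0 : 'I_(size S)) : conv S S`_k0.
Proof.
exists (fun k => (k == k0)%:R); split; first by move=> k; rewrite ler0n.
split; first by rewrite (bigD1 k0) //= eqxx big1 ?addr0 // => k /negbTE ->.
rewrite (bigD1 k0) //= eqxx scale1r big1 ?addr0 // => k /negbTE ->.
by rewrite scale0r.
Qed.

Lemma conv2 a b (l0 l1 : R) : 0 <= l0 -> 0 <= l1 -> l0 + l1 = 1 ->
  conv [:: a; b] (l0 *: a + l1 *: b).
Proof.
move=> h0 h1 h01.
exists (fun k : 'I_2 => if k == ord0 then l0 else l1); split.
  by move=> k; case: ifP.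
by rewrite !big_ord_recl !big_ord0 /= !addr0.
Qed.

Lemma conv2_inv a b x : conv [:: a; b] x ->
  exists l0 l1 : R, [/\ 0 <= l0, 0 <= l1, l0 + l1 = 1 & x = l0 *: a + l1 *: b].
Proof.
case=> lam [l0 [l1 ->]]; exists (lam ord0), (lam (lift ord0 ord0)); split => //.
  by move: l1; rewrite !big_ord_recl big_ord0 addr0.
by rewrite !big_ord_recl big_ord0 addr0.
Qed.

Lemma conv_pair S (ia ib : 'I_(size S)) (l0 l1 : R) : ia != ib ->
  0 <= l0 -> 0 <= l1 -> l0 + l1 = 1 -> conv S (l0 *: S`_ia + l1 *: S`_ib).
Proof.
move=> nab h0 h1 h01.
exists (fun k => (if k == ia then l0 else 0) + (if k == ib then l1 else 0)); split.
  by move=> k; apply: addr_ge0; case: ifP.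
split.
  rewrite big_split /= -!big_mkcond /= (big_pred1 ia) // (big_pred1 ib) //.
rewrite (eq_bigr (fun k => (if k == ia then l0 *: S`_ia else 0) + (if k == ib then l1 *: S`_ib else 0))).
  by rewrite big_split /= -!big_mkcond /= (big_pred1 ia) // (big_pred1 ib).
move=> k _; rewrite scalerDl; congr (_ + _); case: eqP => [->|_]; rewrite ?scale0r //.
Qed.

End Geo.

Section Pt.
Variables (R : realFieldType) (n : nat).
Local Open Scope ring_scope.

Lemma pt_dot (c : 'rV[R]_n) (z : {perm 'I_n}) :
  dotv c (perm_pt R z) = fval (fun i => c 0 i) z + \sum_i c 0 i.
Proof.
rewrite /dotv /fval -big_split /=; apply: eq_bigr => i _.
by rewrite mxE -[(z i).+1]addn1 natrD mulrDr mulr1.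
Qed.

Lemma pt_inj (z z' : {perm 'I_n}) : perm_pt R z = perm_pt R z' -> z = z'.
Proof.
move=> E; apply/permP => i; apply: val_inj.
have := congr1 (fun M : 'rV[R]_n => M 0 i) E; rewrite !mxE => /eqP.
by rewrite eqr_nat eqSS => /eqP.
Qed.

Lemma pt_convex (z u v : {perm 'I_n}) (l0 l1 : R) : u != v ->
  0 <= l0 -> 0 <= l1 -> l0 + l1 = 1 ->
  perm_pt R z = l0 *: perm_pt R u + l1 *: perm_pt R v -> z = u \/ z = v.
Proof.
move=> nuv h0 h1 h01 E.
pose P (y : {perm 'I_n}) i : R := ((y i).+1)%:R.
have Zi i : P z i = l0 * P u i + l1 * P v i.
  by have := congr1 (fun M : 'rV[R]_n => M 0 i) E; rewrite !mxE.
have KS (y : {perm 'I_n}) : \sum_i (P y i)^+2 = \sum_(i : 'I_n) (((i : nat).+1)%:R)^+2.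
  by rewrite [RHS](reindex_inj (@perm_inj _ y)).
have l1E : l1 = 1 - l0 by lra.
have key : l0 * l1 * \sum_i (P u i - P v i)^+2 = 0.
  have -> : l0 * l1 * \sum_i (P u i - P v i)^+2 =
            - \sum_i ((P z i)^+2 - l0 * (P u i)^+2 - l1 * (P v i)^+2).
    rewrite mulr_sumr -sumrN; apply: eq_bigr => i _; rewrite Zi l1E; ring.
  rewrite !sumrB -!mulr_sumr !KS l1E; ring.
have [t ht] : exists t, u t != v t.
  case: (pickP (fun t => u t != v t)) => [t ht|h]; first by exists t.
  by move/eqP: nuv; case; apply/permP => t; move: (h t) => /negbFE/eqP.
have pos : 0 < \sum_i (P u i - P v i)^+2.
  apply: (@sum_gt0 R _ _ _ t) => //; last by move=> i _; exact: sqr_ge0.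
  rewrite lt_def sqr_ge0 andbT sqrf_eq0 subr_eq0 /P eqr_nat eqSS.
  by apply: contra ht => /eqP /val_inj ->.
move/eqP: key; rewrite mulf_eq0 (gt_eqF pos) orbF mulf_eq0 => /orP[] /eqP e.
  right; apply: pt_inj; rewrite E e scale0r add0r.
  by move: h01; rewrite e add0r => ->; rewrite scale1r.
left; apply: pt_inj; rewrite E e scale0r addr0.
by move: h01; rewrite e addr0 => ->; rewrite scale1r.
Qed.
End Pt.

Lemma free_between n (w : {perm 'I_n}) p (t : 'I_n) (a b k : nat) :
  allowed w p t a -> allowed w p t b -> (a <= k < b)%N -> freeb w p t k.
Proof. by rewrite /allowed /freeb; case: ifP => _; lia. Qed.

Lemma free_frozen n (w : {perm 'I_n}) p (t : 'I_n) (a k : nat) :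
  allowed w p t a -> (w t != a :> nat) -> (a.-1 <= k <= a)%N -> freeb w p t k.
Proof. by rewrite /allowed /freeb; case: ifP => _; lia. Qed.

Section Fwd.
Variables (n : nat) (w : {perm 'I_n}) (p : nat) (R : realFieldType) (c : 'I_n -> R).
Variables (u v : {perm 'I_n}).
Local Open Scope ring_scope.
Hypotheses (bu : inbox w p u) (bv : inbox w p v) (nuv : u != v)
  (Euv : fval c u = fval c v)
  (Hmax : forall z, inbox w p z -> fval c z <= fval c u)
  (Huniq : forall z, inbox w p z -> fval c z = fval c u -> z = u \/ z = v).

Lemma swap_is_v (x y : 'I_n) : (u y < u x)%N -> c x <= c y ->
  inbox w p (tperm x y * u)%g -> (tperm x y * u)%g = v.
Proof.
move=> lt cle bs.
have ge : fval c u <= fval c (tperm x y * u)%g.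
  rewrite swap_val lerDl; apply: mulr_le0; first by rewrite subr_le0.
  by rewrite subr_le0 ler_nat ltnW.
have eq : fval c (tperm x y * u)%g = fval c u by apply/le_anti; rewrite ge Hmax.
case: (Huniq bs eq) => // e; move: (congr1 (fun s : {perm 'I_n} => s x) e).
by rewrite permM tpermL => /perm_inj eyx; move: lt; rewrite eyx ltnn.
Qed.

Lemma stepA : exists x y : 'I_n, (u y < u x)%N /\ v = (tperm x y * u)%g.
Proof.
have [[j [j' vj]]|nov] := Classical_Prop.classic (exists j j', viol w p c u j j').
  have [x [y [h1 h2 _ _ h5]]] := descent bu (leqnn _) vj.
  by exists x, y; split => //; rewrite swap_is_v.
exfalso.
have Hs : forall x y (k : 'I_n), (u y <= k < u x)%N -> freeb w p x k -> freeb w p y k -> c y < c x.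
  move=> x y k hb fx fy; rewrite ltNge; apply/negP => cle.
  apply: nov; exists x, y; split => //; first by case/andP: hb; lia.
  by exists k.
have nvu : v != u by rewrite eq_sym.
by move: (level_strict bu bv Hs nvu); rewrite Euv ltxx.
Qed.

Lemma stepB (x y : 'I_n) : (u y < u x)%N -> v = (tperm x y * u)%g ->
  forall m : 'I_n, (u y < m < u x)%N -> w ((u^-1)%g m) = m.
Proof.
move=> lt ev m /andP[im ml].
set P := (u^-1)%g m.
have uP : (u P = m :> nat) by rewrite permKV.
have nxy : x != y by apply: contraTneq lt => ->; rewrite ltnn.
have vx : v x = u y by rewrite ev permM tpermL.
have vy : v y = u x by rewrite ev permM tpermR.
have cxy : c x = c y.
  move: Euv; rewrite ev swap_val => h.
  have /eqP : (c x - c y) * ((u y)%:R - (u x)%:R) = 0.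
    by apply: (addrI (fval c u)); rewrite addr0 -h.
  rewrite mulf_eq0 => /orP[|]; first by rewrite subr_eq0 => /eqP.
  by rewrite subr_eq0 eqr_nat (ltn_eqF lt).
have bx (s : {perm 'I_n}) t : inbox w p s -> allowed w p t (s t) by move/forallP.
have aP := bx u P bu; have ax := bx u x bu; have ax' := bx v x bv.
have ay := bx u y bu; have ay' := bx v y bv.
rewrite /allowed vx vy uP in aP ax ax' ay ay'.
apply: val_inj => /=; apply/eqP; apply/negPn/negP => wPm.
have fP1 : freeb w p P m.-1.
  by apply: (free_frozen aP wPm); rewrite leqnn /= leq_pred.
have fP2 : freeb w p P m.
  by apply: (free_frozen aP wPm); rewrite leq_pred leqnn.
have fy : freeb w p y m.-1.
  apply: (free_between ay ay'); clear - im ml; lia.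
have fx : freeb w p x m.
  by apply: (free_between ax' ax); rewrite ltnW ?ml.
case: (leP (c P) (c y)) => cPy.
  have vj : viol w p c u P y.
    split => //; first by rewrite uP.
    by exists m.-1; split => //; rewrite uP; clear - im; lia.
  have [x' [y' [h1 h2 h3 h4 h5]]] := descent bu (leqnn _) vj.
  have e := swap_is_v h1 h2 h5.
  have nx'x : x' != x by apply/eqP => ex; move: h4; rewrite ex uP; clear - ml; lia.
  have nx'y : x' != y by apply/eqP => ey; move: h3 h1; rewrite ey => a1 a2; clear - a1 a2; lia.
  move: (congr1 (fun s : {perm 'I_n} => s x') e).
  rewrite permM tpermL ev permM tpermD; try by rewrite eq_sym.
  by move=> /perm_inj e'; move: h1; rewrite e' ltnn.
have cxP : c x <= c P by rewrite cxy ltW.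
have vj : viol w p c u x P.
  split => //; first by rewrite uP.
  by exists m; split => //; rewrite uP; clear - ml; lia.
have [x' [y' [h1 h2 h3 h4 h5]]] := descent bu (leqnn _) vj.
have e := swap_is_v h1 h2 h5.
have ny'x : y' != x by apply/eqP => ex; move: h4 h1; rewrite ex => a1 a2; clear - a1 a2; lia.
have ny'y : y' != y by apply/eqP => ey; move: h3; rewrite ey uP; clear - im; lia.
move: (congr1 (fun s : {perm 'I_n} => s y') e).
rewrite permM tpermR ev permM tpermD; try by rewrite eq_sym.
by move=> /perm_inj e'; move: h1; rewrite e' ltnn.
Qed.

End Fwd.

Lemma fix_two n (s : {perm 'I_n}) (a b : 'I_n) : a != b ->
  (forall t, t != a -> t != b -> s t = t) -> s = 1%g \/ s = tperm a b.
Proof.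
move=> nab H.
have inab (x : 'I_n) : s x = a \/ s x = b \/ s x = x.
  case: (eqVneq (s x) a) => [|sa]; first by left.
  case: (eqVneq (s x) b) => [|sb]; first by right; left.
  by right; right; apply: (perm_inj (s := s)); rewrite H.
have nba : b != a by rewrite eq_sym.
have [e1|[e1|e1]] := inab a.
- have [e2|[e2|e2]] := inab b.
  + by move: (perm_inj (etrans e2 (esym e1))) => e; rewrite e eqxx in nba.
  + left; apply/permP => t; rewrite perm1.
    case: (eqVneq t a) => [->//|ta]; case: (eqVneq t b) => [->//|tb]; exact: H.
  + left; apply/permP => t; rewrite perm1.
    case: (eqVneq t a) => [->//|ta]; case: (eqVneq t b) => [->//|tb]; exact: H.
- have [e2|[e2|e2]] := inab b.
  + right; apply/permP => t.
    case: (eqVneq t a) => [->|ta]; first by rewrite tpermL.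
    case: (eqVneq t b) => [->|tb]; first by rewrite tpermR.
    by rewrite H // tpermD // eq_sym.
  + by move: (perm_inj (etrans e2 (esym e1))) => e; rewrite e eqxx in nba.
  + by move: (perm_inj (etrans e2 (esym e1))) => e; rewrite e eqxx in nba.
- have [e2|[e2|e2]] := inab b.
  + by move: (perm_inj (etrans e2 (esym e1))) => e; rewrite e eqxx in nba.
  + left; apply/permP => t; rewrite perm1.
    case: (eqVneq t a) => [->//|ta]; case: (eqVneq t b) => [->//|tb]; exact: H.
  + left; apply/permP => t; rewrite perm1.
    case: (eqVneq t a) => [->//|ta]; case: (eqVneq t b) => [->//|tb]; exact: H.
Qed.

Lemma two_point n (u z : {perm 'I_n}) (a b : 'I_n) : a != b ->
  (forall t, t != a -> t != b -> z t = u t) -> z = u \/ z = (tperm a b * u)%g.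
Proof.
move=> nab H.
have zE : z = ((z * u^-1) * u)%g by rewrite -mulgA mulVg mulg1.
have Hs : forall t, t != a -> t != b -> (z * u^-1)%g t = t.
  by move=> t ta tb; rewrite permM H // permK.
by case: (fix_two nab Hs) => e; [left; rewrite zE e mul1g | right; rewrite zE e].
Qed.

Section Bwd.
Variables (n : nat) (w : {perm 'I_n}) (p : nat) (R : realFieldType).
Variables (u v : {perm 'I_n}) (i l : 'I_n).
Hypotheses (bu : inbox w p u) (il : (i < l)%N) (hv : forall t, v t = tperm i l (u t))
  (fr : forall m : 'I_n, (i < m)%N -> (m < l)%N -> w ((u^-1)%g m) = m).
Local Open Scope ring_scope.

Definition cb (t : 'I_n) : R :=
  if ((u t : nat) == i) || ((u t : nat) == l) then (i + l)%:R
  else if ((i < u t) && (u t < l))%N then (if (t < p)%N then (2 * n)%:R else - (2 * n)%:R)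
  else (2 * u t)%:R.

Lemma frozen (t : 'I_n) : (i < u t)%N -> (u t < l)%N -> (w t = u t :> nat).
Proof. by move=> h1 h2; have := fr h1 h2; rewrite permK => ->. Qed.

Lemma u_a : u ((u^-1)%g i) = i. Proof. by rewrite permKV. Qed.
Lemma u_b : u ((u^-1)%g l) = l. Proof. by rewrite permKV. Qed.

Lemma cb_exc : forall x y (k : 'I_n), (u y <= k < u x)%N -> freeb w p x k -> freeb w p y k ->
  cb y < cb x \/ (x = (u^-1)%g l /\ y = (u^-1)%g i).
Proof.
move=> x y k /andP[yk kx] fx fy.
have ln : (l < n)%N := ltn_ord l.
have uxn : (u x < n)%N := ltn_ord (u x).
have uyn : (u y < n)%N := ltn_ord (u y).
have Hpos : 0 < (2 * n)%:R :> R by rewrite ltr0n; lia.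
rewrite /cb.
case Mx: ((i < u x) && (u x < l))%N.
  have [ix xl] := andP Mx.
  have xp : (x < p)%N.
    case: (ltnP x p) => // px; move: fx; rewrite /freeb ltnNge px /= (frozen ix xl).
    by move=> h; move: (leq_ltn_trans h kx); rewrite ltnn.
  have ex : (((u x : nat) == i) || ((u x : nat) == l)) = false.
    by apply/negbTE; rewrite negb_or; apply/andP; split; apply/eqP; clear - ix xl; lia.
  rewrite ex xp; left.
  case: ifP => _; first by rewrite ltr_nat; clear - il ln; lia.
  case My: ((i < u y) && (u y < l))%N.
    have [iy yl] := andP My.
    have yp : (p <= y)%N.
      case: (leqP p y) => // py; move: fy; rewrite /freeb py (frozen iy yl).
      by move=> h; move: (leq_ltn_trans yk h); rewrite ltnn.
    by rewrite ltnNge yp /= gtrN.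
  by rewrite ltr_nat; clear - uyn; lia.
case My: ((i < u y) && (u y < l))%N.
  have [iy yl] := andP My.
  have yp : (p <= y)%N.
    case: (leqP p y) => // py; move: fy; rewrite /freeb py (frozen iy yl).
    by move=> h; move: (leq_ltn_trans yk h); rewrite ltnn.
  have ey : (((u y : nat) == i) || ((u y : nat) == l)) = false.
    by apply/negbTE; rewrite negb_or; apply/andP; split; apply/eqP; clear - iy yl; lia.
  rewrite ey ltnNge yp /=; left.
  by apply: (@lt_le_trans _ _ 0); rewrite ?oppr_lt0 //; case: ifP => _; rewrite ler0n.
have uyx : (u y < u x)%N by apply: leq_ltn_trans yk kx.
case: (boolP (((u x : nat) == i) || ((u x : nat) == l))) => ex;
case: (boolP (((u y : nat) == i) || ((u y : nat) == l))) => ey.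
- right; case/orP: ex => /eqP ex; case/orP: ey => /eqP ey.
  + by move: uyx; rewrite ex ey ltnn.
  + by move: uyx il; rewrite ex ey; lia.
  + split; apply: (perm_inj (s := u)); apply: val_inj; rewrite permKV //.
  + by move: uyx; rewrite ex ey ltnn.
- left; rewrite ltr_nat; move: Mx My ex ey uyx; clear - il; lia.
- left; rewrite ltr_nat; move: Mx My ex ey uyx; clear - il; lia.
- left; rewrite ltr_nat; move: uyx; clear; lia.
Qed.

Lemma cb_ab : cb ((u^-1)%g i) = cb ((u^-1)%g l).
Proof. by rewrite /cb u_a u_b !eqxx orbT. Qed.

Lemma v_swap : v = (tperm ((u^-1)%g i) ((u^-1)%g l) * u)%g.
Proof. by apply/permP => t; rewrite hv -swap_pos u_a u_b permM. Qed.

Lemma bwd_val : fval cb v = fval cb u.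
Proof. by rewrite v_swap swap_val cb_ab subrr mul0r addr0. Qed.

Lemma bwd_max z : inbox w p z ->
  fval cb z <= fval cb u /\ (fval cb z = fval cb u -> z = u \/ z = v).
Proof.
move=> bz.
have [h1 h2] := level_exc bu bz cb_ab cb_exc.
split => // E; rewrite v_swap; apply: two_point (h2 E).
apply/eqP => /(congr1 u); rewrite u_a u_b => /eqP; rewrite -(inj_eq val_inj) /= => /eqP e.
by move: il; rewrite e ltnn.
Qed.
End Bwd.

Section Main.
Variables (R : realFieldType) (n : nat) (w : {perm 'I_n}) (p : nat).
Hypothesis M : mono w p.
Local Open Scope ring_scope.

Lemma inS_box (z : {perm 'I_n}) : (bruhat_le 1 z && bruhat_le z w) = inbox w p z.
Proof.
apply/idP/idP => [/andP[_ h]|h]; first exact: box_of_le h.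
by rewrite one_le (box_le h).
Qed.

Notation S := (bip_points R 1%g w).

Lemma S_nth (k : 'I_(size S)) : exists z, inbox w p z /\ S`_k = perm_pt R z.
Proof.
have : S`_k \in S by apply: mem_nth.
case/mapP => z; rewrite mem_enum inE inS_box => bz ->; by exists z.
Qed.

Lemma S_idx (z : {perm 'I_n}) : inbox w p z -> exists k : 'I_(size S), S`_k = perm_pt R z.
Proof.
move=> bz; have zS : perm_pt R z \in S.
  by apply: map_f; rewrite mem_enum inE inS_box.
by exists (Ordinal (etrans (index_mem _ _) zS)); rewrite /= nth_index.
Qed.

Lemma dotvDZ (c x y : 'rV[R]_n) (s t : R) :
  dotv c (s *: x + t *: y) = s * dotv c x + t * dotv c y.
Proof.
rewrite /dotv !mulr_sumr -big_split /=; apply: eq_bigr => j _.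
rewrite !mxE; ring.
Qed.

End Main.

Section Dirs.
Local Open Scope ring_scope.

Lemma fwd_dir (R : realFieldType) (n : nat) (w u v : {perm 'I_n}) (p : nat) :
  mono w p -> inbox w p u -> inbox w p v ->
  is_edge (bip_points R 1%g w) (perm_pt R u) (perm_pt R v) ->
  exists i l : 'I_n, (i < l)%N /\ (forall x, v x = tperm i l (u x)) /\
     forall m : 'I_n, (i < m)%N -> (m < l)%N ->
       (u^-1)%g m = (w^-1)%g m /\ (v^-1)%g m = (w^-1)%g m.
Proof.
move=> M bu bv [nab [c Hc]].
set S := bip_points R 1%g w.
set a := perm_pt R u; set b := perm_pt R v.
have ca : conv [:: a; b] a.
  by have := @conv2 R n a b 1 0 ler01 (lexx 0) (addr0 1); rewrite scale1r scale0r addr0.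
have cb' : conv [:: a; b] b.
  by have := @conv2 R n a b 0 1 (lexx 0) ler01 (add0r 1); rewrite scale1r scale0r add0r.
have [caS fa] := (Hc a).2 ca.
have [cbS fb] := (Hc b).2 cb'.
have Eab : dotv c a = dotv c b by apply/le_anti; rewrite fa // fb.
have nuv : u != v by apply/eqP => e; apply: nab; rewrite /a /b e.
pose cv := fun t : 'I_n => c 0 t.
have ptc z : dotv c (perm_pt R z) = fval cv z + \sum_i c 0 i by rewrite pt_dot.
have convz z : inbox w p z -> conv S (perm_pt R z).
  by move=> bz; have [k <-] := S_idx R M bz; apply: conv_nth.
have Euv : fval cv u = fval cv v by apply: (addIr (\sum_i c 0 i)); rewrite -!ptc.
have Hmax z : inbox w p z -> fval cv z <= fval cv u.
  by move=> bz; rewrite -(lerD2r (\sum_i c 0 i)) -!ptc; apply: fa; apply: convz.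
have Huniq z : inbox w p z -> fval cv z = fval cv u -> z = u \/ z = v.
  move=> bz E.
  have fz : face S c (perm_pt R z).
    split; first exact: convz.
    by move=> y cy; rewrite ptc E -ptc; apply: fa.
  have [l0 [l1 [h0 h1 h01 ez]]] := conv2_inv ((Hc _).1 fz).
  exact: pt_convex nuv h0 h1 h01 ez.
have [x [y [lt ev]]] := stepA bu bv nuv Euv Hmax Huniq.
have fr := stepB bu bv Euv Hmax Huniq lt ev.
exists (u y), (u x); split => //.
have vE t : v t = tperm (u y) (u x) (u t) by rewrite ev -swap_pos permM tpermC.
split => // m h1 h2.
have wm : w ((u^-1)%g m) = m by apply: fr; rewrite h1 h2.
have e1 : (u^-1)%g m = (w^-1)%g m by apply: (perm_inj (s := w)); rewrite permKV.
split => //; rewrite -e1; apply: (perm_inj (s := v)); rewrite permKV vE permKV tpermD //.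
  by apply/eqP => e; move: h1; rewrite e ltnn.
by apply/eqP => e; move: h2; rewrite e ltnn.
Qed.

Lemma bwd_dir (R : realFieldType) (n : nat) (w u v : {perm 'I_n}) (p : nat) :
  mono w p -> inbox w p u -> inbox w p v ->
  (exists i l : 'I_n, (i < l)%N /\ (forall x, v x = tperm i l (u x)) /\
     forall m : 'I_n, (i < m)%N -> (m < l)%N ->
       (u^-1)%g m = (w^-1)%g m /\ (v^-1)%g m = (w^-1)%g m) ->
  is_edge (bip_points R 1%g w) (perm_pt R u) (perm_pt R v).
Proof.
move=> M bu bv [i [l [il [hv hm]]]].
have fr : forall m : 'I_n, (i < m)%N -> (m < l)%N -> w ((u^-1)%g m) = m.
  by move=> m h1 h2; rewrite (hm m h1 h2).1 permKV.
set S := bip_points R 1%g w.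
set a := perm_pt R u; set b := perm_pt R v.
pose cc := cb p R u i l.
pose c : 'rV[R]_n := \row_t cc t.
have ptc z : dotv c (perm_pt R z) = fval cc z + \sum_t c 0 t.
  rewrite pt_dot; congr (_ + _); apply: eq_bigr => t _; by rewrite mxE.
have nab : a != b.
  apply/eqP => /pt_inj e.
  have := hv ((u^-1)%g i); rewrite -e permKV tpermL => e'.
  by move: il; rewrite {1}e' ltnn.
set M0 := dotv c a.
have dvb : dotv c b = M0 by rewrite /M0 !ptc bwd_val.
have Hle (k : 'I_(size S)) : dotv c S`_k <= M0.
  have [z [bz ->]] := S_nth M k.
  by rewrite /M0 !ptc lerD2r; exact: (bwd_max R bu il hv fr bz).1.
have Heq (k : 'I_(size S)) : dotv c S`_k = M0 -> S`_k = a \/ S`_k = b.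
  have [z [bz ->]] := S_nth M k.
  rewrite /M0 !ptc => /addIr E.
  by case: ((bwd_max R bu il hv fr bz).2 E) => ->; [left|right].
have convz z : inbox w p z -> conv S (perm_pt R z).
  by move=> bz; have [k <-] := S_idx R M bz; apply: conv_nth.
split; first exact/eqP.
exists c => x; split.
  case=> [[lam [lam0 [lam1 xE]]] fx].
  have ge : M0 <= dotv c x by apply: fx; apply: convz.
  have dsum : dotv c x = \sum_k lam k * dotv c S`_k by rewrite xE dotv_sum.
  have nn k : 0 <= lam k * (M0 - dotv c S`_k) by rewrite mulr_ge0 // subr_ge0.
  have zero : forall k, lam k * (M0 - dotv c S`_k) = 0.
    move=> k0; apply: (psumr_eq0P (P := predT) (F := fun k => lam k * (M0 - dotv c S`_k)) (fun k' _ => nn k')) => //.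
    have S0 : 0 <= \sum_k lam k * (M0 - dotv c S`_k) by apply: sumr_ge0 => k' _; exact: nn.
    apply/le_anti; rewrite S0 andbT.
    rewrite (eq_bigr (fun k => M0 * lam k - lam k * dotv c S`_k)); last first.
      by move=> k _; rewrite mulrBr mulrC.
    by rewrite sumrB -mulr_sumr lam1 mulr1 -dsum subr_le0.
  have hk k : lam k = (if S`_k == a then lam k else 0) + (if S`_k == b then lam k else 0).
    case: (eqVneq (lam k) 0) => [->|nz]; first by rewrite !if_same addr0.
    have : dotv c S`_k = M0.
      by move: (zero k) => /eqP; rewrite mulf_eq0 (negbTE nz) /= subr_eq0 => /eqP.
    case/Heq => ->; rewrite eqxx; first by rewrite (negbTE nab) addr0.
    by rewrite eq_sym (negbTE nab) add0r.
  set l0 := \sum_(k < size S) (if S`_k == a then lam k else 0).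
  set l1 := \sum_(k < size S) (if S`_k == b then lam k else 0).
  have xE' : x = l0 *: a + l1 *: b.
    rewrite xE /l0 /l1 !scaler_suml -big_split /=; apply: eq_bigr => k _.
    by rewrite {1}(hk k) scalerDl; congr (_ + _); case: eqP => [->|]; rewrite ?scale0r.
  have s01 : l0 + l1 = 1 by rewrite /l0 /l1 -big_split /= -lam1; apply: eq_bigr => k _; rewrite -hk.
  rewrite xE'; apply: conv2 => //.
    by apply: sumr_ge0 => k _; case: ifP.
  by apply: sumr_ge0 => k _; case: ifP.
move=> cx; have [l0 [l1 [h0 h1 h01 ->]]] := conv2_inv cx.
have [ia ea] := S_idx R M bu.
have [ib eb] := S_idx R M bv.
have nia : ia != ib by apply: contraNneq nab => e; rewrite /a /b -ea -eb e.
split.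
  by have := conv_pair nia h0 h1 h01; rewrite ea eb.
move=> y cy; rewrite dotvDZ dvb -mulrDl h01 mul1r.
exact: conv_le cy Hle.
Qed.

End Dirs.


Theorem corollary4p3 (R : realFieldType) (n : nat) (w u v : {perm 'I_n}) :
  grassmannian w ->
  bruhat_le 1%g u -> bruhat_le u w ->
  bruhat_le 1%g v -> bruhat_le v w ->
  (is_edge (bip_points R 1%g w) (perm_pt R u) (perm_pt R v) <->
   exists i l : 'I_n, (i < l)%N /\ (forall x, v x = tperm i l (u x)) /\
     forall m : 'I_n, (i < m)%N -> (m < l)%N ->
       (u^-1)%g m = (w^-1)%g m /\ (v^-1)%g m = (w^-1)%g m).
Proof.
move=> gw _ uw _ vw.
have [p M] := grass_mono gw.
have bu := box_of_le M uw; have bv := box_of_le M vw.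
by split; [apply: (fwd_dir M bu bv) | apply: (bwd_dir R M bu bv)].
Qed.
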